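(* The open set $\mathcal T_+\setminus\mathcal L$ is connected and simply connected.
   Context: Let $d\ge2$ and let $\Pi_0^{(c)}=\mathbb C^{d}$ with coordinates $z^0,\dots,z^{d-1}$ and bilinear form $(z,z')=z^0z'^0-\sum_{j=1}^{d-1}z^jz'^j$ (complex Minkowski space). The future tube is $\mathcal T_+=\{X+iY\in\Pi_0^{(c)}: X,Y\in\mathbb R^d,\ (Y,Y)>0,\ Y^0>0\}$, and $\mathcal L=\{z\in\Pi_0^{(c)}:(z,z)+1\in(-\infty,0]\}$. *)

(* Defs.v *)
From HB Require Import structures.
From mathcomp Require Import all_boot all_order all_algebra.
From mathcomp Require Import all_classical all_reals all_analysis.
From mathcomp Require Import complex.
Set Implicit Arguments. Unset Strict Implicit. Unset Printing Implicit Defensive.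
Import Order.TTheory GRing.Theory Num.Theory.
Import numFieldTopology.Exports numFieldNormedType.Exports.
Local Open Scope classical_set_scope.
Local Open Scope ring_scope.

(* A point z = X + iY of complex Minkowski space C^d is represented by the
   pair (X, Y) of real row vectors; the topology is the product topology
   on R^d x R^d, i.e. the usual topology of C^d = R^(2d). *)
Notation cpoint R d := ('rV[R]_d * 'rV[R]_d)%type.

Definition ccoord (R : realType) (d : nat) (z : cpoint R d) (j : 'I_d) : R[i] :=
  (z.1 0 j +i* z.2 0 j)%C.

Definition msign (F : ringType) (d : nat) (j : 'I_d) : F :=
  if val j == 0%N then 1 else -1.

Definition cform (R : realType) (d : nat) (z z' : cpoint R d) : R[i] :=
  \sum_(j < d) msign _ j * ccoord z j * ccoord z' j.

Definition rform (R : realType) (d : nat) (Y Y' : 'rV[R]_d) : R :=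
  \sum_(j < d) msign _ j * Y 0 j * Y' 0 j.

Definition coord0 (R : realType) (d : nat) (Y : 'rV[R]_d) : R :=
  \sum_(j < d | val j == 0%N) Y 0 j.

Definition future_tube (R : realType) (d : nat) : set (cpoint R d) :=
  [set z | 0 < rform z.2 z.2 /\ 0 < coord0 z.2].

(* L = { z | (z,z) + 1 in (-oo, 0] }; in the numClosedField R[i],
   w <= 0 means exactly that w is real and nonpositive. *)
Definition cutL (R : realType) (d : nat) : set (cpoint R d) :=
  [set z | cform z z + 1 <= 0].

Definition path_connected_set (R : realType) (T : topologicalType) (A : set T) :=
  forall x y, A x -> A y ->
    exists g : R -> T, [/\ {within `[0, 1], continuous g},
      g @` `[0, 1] `<=` A, g 0 = x & g 1 = y].

Definition simply_connected (R : realType) (T : topologicalType) (A : set T) :=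
  path_connected_set R A /\
  forall g : R -> T,
    {within `[0, 1], continuous g} -> g @` `[0, 1] `<=` A -> g 0 = g 1 ->
    exists H : R * R -> T,
      [/\ {within `[0, 1] `*` `[0, 1], continuous H},
          H @` (`[0, 1] `*` `[0, 1]) `<=` A,
          (forall t, t \in `[0, 1] -> H (t, 0) = g t /\ H (t, 1) = g 0) &
          (forall s, s \in `[0, 1] -> H (0, s) = g 0 /\ H (1, s) = g 0)].

Arguments future_tube : clear implicits.
Arguments cutL : clear implicits.
Arguments simply_connected R {T} A.
Arguments path_connected_set R {T} A.

(* Main.v *)
Require Import Defs.
From HB Require Import structures.
From mathcomp Require Import all_boot all_order all_algebra.
From mathcomp Require Import all_classical all_reals all_analysis.
From mathcomp Require Import complex.
Import numFieldTopology.Exports numFieldNormedType.Exports.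
Local Open Scope classical_set_scope.
Local Open Scope ring_scope.
From mathcomp Require Import ring lra.
Import Order.TTheory GRing.Theory Num.Theory.
Local Open Scope classical_set_scope.
Local Open Scope complex_scope.
Local Open Scope ring_scope.

Section Alg.
Variable R : realType.
Variable d : nat.
Variable j0 : 'I_d.
Hypothesis hj0 : val j0 = 0%N.

Lemma sumC (F : 'I_d -> R[i]) :
  \sum_(i < d) F i = ((\sum_(i < d) complex.Re (F i)) +i* (\sum_(i < d) complex.Im (F i)))%C.
Proof.
elim/big_rec3 : _ => //= i x y z _ ->. by case: (F i).
Qed.

Definition sp (X Y : 'rV[R]_d) := \sum_(j < d | val j != 0%N) X 0 j * Y 0 j.

Lemma neq_j0 (j : 'I_d) : (j != j0) = (val j != 0%N).
Proof. by rewrite -(inj_eq val_inj) hj0. Qed.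

Lemma rformE (X Y : 'rV[R]_d) : rform X Y = X 0 j0 * Y 0 j0 - sp X Y.
Proof.
rewrite /rform (bigD1 j0) //= /msign hj0 eqxx mul1r; congr (_ + _).
rewrite /sp -sumrN; apply: eq_big => j; first by rewrite -(inj_eq val_inj) hj0.
by rewrite -(inj_eq val_inj) hj0 => /negbTE ->; ring.
Qed.

Lemma coord0E (Y : 'rV[R]_d) : Defs.coord0 Y = Y 0 j0.
Proof.
rewrite /Defs.coord0 (big_pred1 j0) // => j /=.
by rewrite -(inj_eq val_inj) hj0.
Qed.

Lemma term_eq (m x y : R) :
  ((m +i* 0) * (x +i* y) * (x +i* y) = (m * (x * x - y * y)) +i* (m * (2 * (x * y))))%C.
Proof. rewrite /=. congr (_ +i* _); ring. Qed.

Lemma cformE (z : Defs.cpoint R d) :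
  cform z z = ((rform z.1 z.1 - rform z.2 z.2) +i* (2 * rform z.1 z.2))%C.
Proof.
rewrite /cform (eq_bigr (fun j => ((msign R j +i* 0) * ccoord z j * ccoord z j)%C)); last first.
  move=> j _; rewrite /msign; case: ifP => _ //=; congr (_ * _ * _); apply/eqP; rewrite eq_complex /= oppr0 !eqxx //.
rewrite sumC; congr (_ +i* _).
  rewrite /rform -sumrB; apply: eq_bigr => j _; rewrite /ccoord term_eq /=; ring.
rewrite /rform mulr_sumr; apply: eq_bigr => j _; rewrite /ccoord term_eq /=; ring.
Qed.

Lemma cutL_iff (z : Defs.cpoint R d) :
  cutL R d z <-> (rform z.1 z.2 = 0 /\ rform z.1 z.1 - rform z.2 z.2 + 1 <= 0).
Proof.
rewrite /cutL /= cformE lecE /=.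
split.
  move=> /andP[/eqP h1 h2]; split; last by [].
  move: h1; rewrite addr0 => /eqP h1; lra.
by move=> [-> h]; rewrite mulr0 addr0 eqxx h.
Qed.



Definition fut (Y : 'rV[R]_d) := 0 < rform Y Y /\ 0 < Defs.coord0 Y.
Definition Sset := future_tube R d `\` cutL R d.

Lemma S_iff z : Sset z <-> fut z.2 /\ ~ (rform z.1 z.2 = 0 /\ rform z.1 z.1 - rform z.2 z.2 + 1 <= 0).
Proof. by rewrite /Sset /= -cutL_iff. Qed.

Lemma rform_exp (a b : R) (X Y : 'rV[R]_d) : rform (a*:X + b*:Y) (a*:X + b*:Y) =
  a^+2 * rform X X + 2*a*b*rform X Y + b^+2 * rform Y Y.
Proof.
rewrite /rform (eq_bigr (fun j => a^+2 * (msign R j * X 0 j * X 0 j) + 2*a*b * (msign R j * X 0 j * Y 0 j) + b^+2 * (msign R j * Y 0 j * Y 0 j))); last first.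
  by move=> j _; rewrite !mxE; ring.
by rewrite !big_split /= -!mulr_sumr.
Qed.

Lemma rformZ (a : R) (X Y : 'rV[R]_d) : rform (a*:X) (a*:Y) = a^+2 * rform X Y.
Proof.
rewrite /rform mulr_sumr; apply: eq_bigr => j _; rewrite !mxE; ring.
Qed.

Lemma coord0_lin (a b : R) (X Y : 'rV[R]_d) :
  Defs.coord0 (a*:X + b*:Y) = a * Defs.coord0 X + b * Defs.coord0 Y.
Proof. by rewrite !coord0E !mxE. Qed.

Lemma coord0Z (a : R) (X : 'rV[R]_d) : Defs.coord0 (a*:X) = a * Defs.coord0 X.
Proof. by rewrite !coord0E !mxE. Qed.

Lemma fut_pos X Y : fut X -> fut Y -> 0 < rform X Y.
Proof.
rewrite /fut !coord0E !rformE => -[h1 hA] [h2 hB].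
set A := X 0 j0 in h1 hA *; set B := Y 0 j0 in h2 hB *.
have hsum : 0 <= \sum_(j < d | val j != 0%N) (B * X 0 j - A * Y 0 j)^+2.
  by apply: sumr_ge0 => j _; apply: sqr_ge0.
rewrite (eq_bigr (fun j => B^+2 * (X 0 j * X 0 j) - 2*A*B * (X 0 j * Y 0 j) + A^+2 * (Y 0 j * Y 0 j))) in hsum; last first.
  by move=> j _; ring.
rewrite !big_split /= sumrN -!mulr_sumr -/(sp X X) -/(sp X Y) -/(sp Y Y) in hsum.
have hAB : 0 < A * B by apply: mulr_gt0.
have e1 : 0 < B^+2 * (A * A - sp X X) by apply: mulr_gt0 => //; apply: exprn_gt0.
have e2 : 0 < A^+2 * (B * B - sp Y Y) by apply: mulr_gt0 => //; apply: exprn_gt0.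
have e3 : 2 * (A * B) * (sp X Y) < 2 * (A * B) * (A * B) by nra.
have : sp X Y < A * B.
  by rewrite -(ltr_pM2l (_ : 0 < 2 * (A * B))) //; apply: mulr_gt0.
lra.
Qed.

Lemma fut_conv (s : R) X Y : 0 <= s <= 1 -> fut X -> fut Y -> fut ((1-s)*:X + s*:Y).
Proof.
move=> /andP[s0 s1] hX hY; have h12 := fut_pos _ _ hX hY.
move: hX hY => [h1 c1] [h2 c2]; split.
  rewrite rform_exp.
  have t1 : 0 <= (1-s)^+2 * rform X X by apply: mulr_ge0 => //; [apply: sqr_ge0 | apply: ltW].
  have t2 : 0 <= s^+2 * rform Y Y by apply: mulr_ge0 => //; [apply: sqr_ge0 | apply: ltW].
  have t3 : 0 <= 2 * (1-s) * s * rform X Y.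
    apply: mulr_ge0; last exact: ltW. apply: mulr_ge0 => //; lra.
  have [hs|hs] := lerP s (1/2).
    have : 0 < (1-s)^+2 * rform X X by apply: mulr_gt0 => //; apply: exprn_gt0; lra.
    lra.
  have : 0 < s^+2 * rform Y Y by apply: mulr_gt0 => //; apply: exprn_gt0; lra.
  lra.
rewrite coord0_lin.
have [hs|hs] := lerP s (1/2).
  have : 0 < (1-s) * Defs.coord0 X by apply: mulr_gt0 => //; lra.
  have : 0 <= s * Defs.coord0 Y by apply: mulr_ge0 => //; lra.
  lra.
have : 0 <= (1-s) * Defs.coord0 X by apply: mulr_ge0 => //; lra.
have : 0 < s * Defs.coord0 Y by apply: mulr_gt0 => //; lra.
lra.
Qed.

Lemma S_scale (l : R) z : 0 < l <= 1 -> Sset z -> Sset (l *: z).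
Proof.
move=> /andP[l0 l1] /S_iff [[h1 h2] hn]; apply/S_iff; split.
  split; first by rewrite /= rformZ; apply: mulr_gt0 => //; apply: exprn_gt0.
  by rewrite /= coord0Z; apply: mulr_gt0.
rewrite /= !rformZ => -[e1 e2]; apply: hn; split.
  have : l^+2 != 0 by rewrite expf_neq0 // gt_eqF.
  by move: e1 => /eqP; rewrite mulf_eq0 => /orP[->|/eqP->].
set p := rform z.1 z.1 - rform z.2 z.2.
have e3 : l^+2 * p + 1 <= 0 by rewrite /p; lra.
have hl2 : 0 < l^+2 <= 1.
  rewrite exprn_gt0 //=; rewrite expr2; nra.
case: (lerP 0 p) => hp.
  have : 0 <= l^+2 * p by apply: mulr_ge0 => //; lra.
  lra.
have : p <= l^+2 * p by nra.
lra.
Qed.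

Lemma sp_ge0 (X : 'rV[R]_d) : 0 <= sp X X.
Proof. by apply: sumr_ge0 => j _; rewrite -expr2 sqr_ge0. Qed.

Lemma sq_le (x M : R) : `|x| <= M -> x * x <= M^+2.
Proof. move=> /[dup] h; rewrite ler_norml => /andP[h1 h2]. nra. Qed.

Lemma sp_le (X : 'rV[R]_d) M : (forall j, `|X 0 j| <= M) -> sp X X <= d%:R * M^+2.
Proof.
move=> hM; rewrite /sp big_mkcond /=.
apply: (@le_trans _ _ (\sum_(j < d) M^+2)).
  apply: ler_sum => j _; case: ifP => _; first exact: sq_le.
  by apply: sqr_ge0.
by rewrite sumr_const card_ord mulr_natl.
Qed.

Lemma Re_bound (w : Defs.cpoint R d) M : (forall j, `|w.1 0 j| <= M) -> (forall j, `|w.2 0 j| <= M) ->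
  - (d%:R * M^+2 + M^+2) <= rform w.1 w.1 - rform w.2 w.2.
Proof.
move=> h1 h2; rewrite !rformE.
have a1 := sp_le _ _ h1. have a2 := sp_ge0 w.2. have a3 := sq_le _ _ (h2 j0).
have a4 : 0 <= w.1 0 j0 * w.1 0 j0 by rewrite -expr2 sqr_ge0.
lra.
Qed.

Lemma small_S (w : Defs.cpoint R d) M (e : R) : fut w.2 ->
  (forall j, `|w.1 0 j| <= M) -> (forall j, `|w.2 0 j| <= M) ->
  0 < e -> e^+2 * (d%:R * M^+2 + M^+2) < 1 -> Sset (e *: w).
Proof.
move=> [f1 f2] h1 h2 e0 he; apply/S_iff; split.
  split; first by rewrite /= rformZ; apply: mulr_gt0 => //; apply: exprn_gt0.
  by rewrite /= coord0Z; apply: mulr_gt0.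
rewrite /= !rformZ => -[_ e2].
have := Re_bound _ _ h1 h2.
set p := rform w.1 w.1 - rform w.2 w.2.
have e3 : e^+2 * p + 1 <= 0 by rewrite /p; lra.
have he2 : 0 <= e^+2 by apply: sqr_ge0.
move=> hp; have : - (e^+2 * (d%:R * M^+2 + M^+2)) <= e^+2 * p.
  by rewrite -mulrN; apply: ler_wpM2l.
lra.
Qed.

End Alg.


Section Top.
Variable R : realType.
Variable d : nat.

Lemma cont_sum (T : topologicalType) (I : Type) (r : seq I) (P : pred I) (F : I -> T -> R) :
  (forall j, continuous (F j)) -> continuous (fun x => \sum_(j <- r | P j) F j x).
Proof.
move=> hF x; elim: r => [|j r IH].
  under eq_fun do rewrite big_nil. exact: cvg_cst.
under eq_fun do rewrite big_cons.
case: (P j); last exact: IH.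
apply: (@cvgD _ _ _ _ _ (F j) (fun x => \sum_(j <- r | P j) F j x)); [exact: hF | exact: IH].
Qed.

Lemma cont_coord1 (j : 'I_d) : continuous (fun z : Defs.cpoint R d => z.1 0 j).
Proof.
move=> z. apply: (@continuous_comp _ _ _ fst (fun M : 'rV[R]_d => M 0 j)).
  exact: cvg_fst.
exact: coord_continuous.
Qed.

Lemma cont_coord2 (j : 'I_d) : continuous (fun z : Defs.cpoint R d => z.2 0 j).
Proof.
move=> z. apply: (@continuous_comp _ _ _ snd (fun M : 'rV[R]_d => M 0 j)).
  exact: cvg_snd.
exact: coord_continuous.
Qed.

Lemma cont_rform (f g : Defs.cpoint R d -> 'rV[R]_d) :
  (forall j, continuous (fun z => f z 0 j)) -> (forall j, continuous (fun z => g z 0 j)) ->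
  continuous (fun z => rform (f z) (g z)).
Proof.
move=> hf hg; rewrite /rform; apply: (@cont_sum _ _ _ _ (fun j z => msign R j * f z 0 j * g z 0 j)) => j z.
apply: cvgM; last exact: hg.
apply: cvgM; [exact: cvg_cst | exact: hf].
Qed.

Lemma open_S : open (Sset R d).
Proof.
rewrite /Sset setDE; apply: openI.
  have -> : future_tube R d = (fun z : Defs.cpoint R d => rform z.2 z.2) @^-1` [set x | 0 < x] `&`
     (fun z : Defs.cpoint R d => Defs.coord0 z.2) @^-1` [set x | 0 < x] by [].
  apply: openI; apply: open_comp; try exact: open_gt.
    by move=> z _; apply: cont_rform => j; exact: cont_coord2.
  move=> z _; rewrite /Defs.coord0.
  exact: (@cont_sum _ _ (index_enum _) (fun j : 'I_d => val j == 0%N) (fun j (z : Defs.cpoint R d) => z.2 0 j) (@cont_coord2) z).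
apply: closed_openC.
have -> : cutL R d = (fun z : Defs.cpoint R d => rform z.1 z.2) @^-1` [set x | x = 0] `&`
    (fun z : Defs.cpoint R d => rform z.1 z.1 - rform z.2 z.2 + 1) @^-1` [set x | x <= 0].
  by apply/seteqP; split => z /=; rewrite cutL_iff.
apply: closedI; apply: preimage_closed; try exact: closed_eq; try exact: closed_le.
  by move=> z _; apply: cont_rform => j; [exact: cont_coord1 | exact: cont_coord2].
move=> z _; apply: cvgD; last exact: cvg_cst.
apply: cvgB; apply: cont_rform => j; solve [exact: cont_coord1 | exact: cont_coord2].
Qed.

End Top.


Section SR.
Variable R : realType.
Definition sigm (s : R) := Num.min 1 (Num.max 0 (3*s - 1)).
Definition rhom (s : R) := Num.min 1 (Num.min (3*s) (3 - 3*s)).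

Lemma minr_cases (x y : R) : (Num.min x y = x /\ x <= y) \/ (Num.min x y = y /\ y < x).
Proof. rewrite minEle; case: leP; auto. Qed.
Lemma maxr_cases (x y : R) : (Num.max x y = y /\ x <= y) \/ (Num.max x y = x /\ y < x).
Proof. rewrite maxEle; case: leP; auto. Qed.

Ltac nomm t := lazymatch t with
  | context[Num.min _ _] => fail
  | context[Num.max _ _] => fail
  | _ => idtac end.
Ltac mm := repeat match goal with
  | |- context[Num.max ?x ?y] => nomm x; nomm y; have [[-> ?]|[-> ?]] := maxr_cases x y
  | |- context[Num.min ?x ?y] => nomm x; nomm y; have [[-> ?]|[-> ?]] := minr_cases x y
  end; try lra.

Lemma sig01 s : 0 <= s <= 1 -> 0 <= sigm s <= 1.
Proof. move=> /andP[h1 h2]; rewrite /sigm; mm. Qed.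
Lemma rho01 s : 0 <= s <= 1 -> 0 <= rhom s <= 1.
Proof. move=> /andP[h1 h2]; rewrite /rhom; mm. Qed.
Lemma sig0 : sigm 0 = 0. Proof. rewrite /sigm; mm. Qed.
Lemma sig1 : sigm 1 = 1. Proof. rewrite /sigm; mm. Qed.
Lemma rho0 : rhom 0 = 0. Proof. rewrite /rhom; mm. Qed.
Lemma rho1 : rhom 1 = 0. Proof. rewrite /rhom; mm. Qed.
Lemma sig_rho s : 0 < sigm s < 1 -> rhom s = 1.
Proof. rewrite /sigm /rhom; mm. Qed.

Lemma sig_cont : continuous sigm.
Proof.
have -> : sigm = (fun=> 1) \min ((fun=> 0) \max (fun s => 3 * s - 1)) by [].
move=> s; apply: continuous_min; first exact: cvg_cst.
apply: continuous_max; first exact: cvg_cst.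
apply: cvgB; last exact: cvg_cst.
apply: cvgM; first exact: cvg_cst. exact: cvg_id.
Qed.

Lemma rho_cont : continuous rhom.
Proof.
have -> : rhom = (fun=> 1) \min ((fun s => 3 * s) \min (fun s => 3 - 3 * s)) by [].
move=> s; apply: continuous_min; first exact: cvg_cst.
apply: continuous_min.
  apply: cvgM; first exact: cvg_cst. exact: cvg_id.
apply: cvgB; first exact: cvg_cst.
apply: cvgM; first exact: cvg_cst. exact: cvg_id.
Qed.
End SR.
Arguments sigm {R}.
Arguments rhom {R}.
Arguments sig01 {R}.
Arguments rho01 {R}.
Arguments sig_rho {R}.


Lemma lin_aux (R : numDomainType) (V : lmodType R) (b z : V) (s : R) :
  b - ((1 - s) *: z + s *: b) = (1 - s) *: (b - z).
Proof.
rewrite scalerBr scalerBl scale1r.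
rewrite opprD addrA.
by rewrite scalerBl scale1r addrAC.
Qed.

Section Key.
Variable R : realType.
Variable d : nat.
Variable j0 : 'I_d.
Hypothesis hj0 : val j0 = 0%N.

Lemma coord_le (w : Defs.cpoint R d) M : `|w| <= M -> forall j, `|w.1 0 j| <= M /\ `|w.2 0 j| <= M.
Proof.
rewrite prod_normE ge_max => /andP[h1 h2] j; split.
  apply: le_trans h1; rewrite [X in _ <= X]mx_normrE.
  exact: (le_trans _ (le_bigmax _ _ (0, j))).
apply: le_trans h2; rewrite [X in _ <= X]mx_normrE.
exact: (le_trans _ (le_bigmax _ _ (0, j))).
Qed.

Lemma key (b : Defs.cpoint R d) (M : R) : Sset R d b -> `|b| <= M ->
  exists Phi : Defs.cpoint R d * R -> Defs.cpoint R d,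
  [/\ continuous Phi, (forall z, Phi (z, 0) = z), (forall z, Phi (z, 1) = b),
      (forall s, Phi (b, s) = b) &
      (forall z s, Sset R d z -> `|z| <= M -> 0 <= s <= 1 -> Sset R d (Phi (z, s)))].
Proof.
move=> hb hbM.
have M0 : 0 <= M by apply: le_trans hbM.
have [del del0 hball] : exists2 del : R, 0 < del & ball b del `<=` Sset R d.
  by apply/nbhs_ballP; apply: open_nbhs_nbhs; split; [exact: open_S|].
set K := d%:R * M^+2 + M^+2.
set A := (d%:R + 1) * (M + 1).
have d0 : 0 <= (d%:R : R) by apply: ler0n.
have A1 : 1 <= A by rewrite /A; have := mulr_ge0 d0 M0; nra.
have A0 : 0 < A by lra.
set e := A^-1.
have e0 : 0 < e by rewrite invr_gt0.
have eA : e * A = 1 by rewrite mulVf // gt_eqF.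
have e1 : e <= 1 by nra.
have he : e^+2 * K < 1.
  have KA : K < A^+2 by rewrite /K /A; nra.
  have : e^+2 * K < e^+2 * A^+2 by rewrite ltr_pM2l // exprn_gt0.
  by rewrite -exprMn eA expr1n.
pose m (z : Defs.cpoint R d) := Num.min 1 (`|z - b| / del).
pose kap (p : Defs.cpoint R d * R) := 1 - rhom p.2 * m p.1 * (1 - e).
pose Phi (p : Defs.cpoint R d * R) := (kap p * (1 - sigm p.2)) *: p.1 + (kap p * sigm p.2) *: b.
have mb : m b = 0 by rewrite /m subrr normr0 mul0r; apply/min_idPr.
have m01 z : 0 <= m z <= 1.
  rewrite /m; have : 0 <= `|z - b| / del by apply: divr_ge0 => //; apply: ltW.
  move=> hh; case: (minr_cases R 1 (`|z - b| / del)) => -[-> ?]; lra.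
exists Phi; split.
- have mc : continuous m.
    have -> : m = (fun=> 1) \min (fun z => `|z - b| / del) by [].
    move=> z; apply: continuous_min; first exact: cvg_cst.
    apply: cvgM; last exact: cvg_cst.
    apply: cvg_norm; apply: cvgB; [exact: cvg_id | exact: cvg_cst].
  have kc : continuous kap.
    move=> p; apply: cvgB; first exact: cvg_cst.
    apply: cvgM; last exact: cvg_cst.
    apply: cvgM.
      apply: (@continuous_comp _ _ _ snd rhom); [exact: cvg_snd | exact: rho_cont].
    apply: (@continuous_comp _ _ _ fst m); [exact: cvg_fst | exact: mc].
  have sc : continuous (fun p : Defs.cpoint R d * R => sigm p.2).
    move=> p; apply: (@continuous_comp _ _ _ snd sigm); [exact: cvg_snd | exact: sig_cont].
  move=> p; apply: cvgD; apply: cvgZ.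
  + apply: cvgM; [exact: kc | apply: cvgB; [exact: cvg_cst | exact: sc]].
  + exact: cvg_fst.
  + apply: cvgM; [exact: kc | exact: sc].
  + exact: cvg_cst.
- move=> z; rewrite /Phi /kap /= sig0 rho0 !mul0r !subr0 !mul1r scale1r scale0r addr0 //.
- move=> z; rewrite /Phi /kap /= sig1 rho1 !mul0r !subr0 !mul1r subrr scale0r add0r scale1r //.
- move=> s; rewrite /Phi /kap /= mb mulr0 mul0r subr0 !mul1r -scalerDl subrK scale1r //.
move=> z s hz hzM /andP[s0 s1].
have hs : 0 <= s <= 1 by rewrite s0 s1.
have /andP[sg0 sg1] := sig01 s hs.
have /andP[rh0 rh1] := rho01 s hs.
have /andP[mz0 mz1] := m01 z.
set w := (1 - sigm s) *: z + sigm s *: b.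
have ePhi : Phi (z, s) = kap (z, s) *: w by rewrite /Phi /w /= scalerDr !scalerA.
have hrm : 0 <= rhom s * m z <= 1 by apply/andP; split; nra.
have k0 : e <= kap (z, s) <= 1 by rewrite /kap /=; apply/andP; split; nra.
have kp : 0 < kap (z, s) <= 1 by apply/andP; split; lra.
rewrite ePhi.
have [hlt|hge] := ltP (`|z - b|) del.
  apply: (@S_scale R d j0 hj0) => //; apply: hball.
  rewrite -ball_normE /ball_ /= /w lin_aux normrZ.
  rewrite (@ger0_norm _ (1 - sigm s)); last lra.
  rewrite distrC.
  have : 0 <= `|z - b| by [].
  nra.
have m1 : m z = 1.
  rewrite /m; apply/min_idPl; rewrite ler_pdivlMr // mul1r //.
have [es0|sn0] := eqVneq (sigm s) 0.
  by apply: (@S_scale R d j0 hj0) => //; rewrite /w es0 subr0 scale1r scale0r addr0.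
have [es1|sn1] := eqVneq (sigm s) 1.
  by apply: (@S_scale R d j0 hj0) => //; rewrite /w es1 subrr scale0r add0r scale1r.
have r1 : rhom s = 1.
  apply: sig_rho; apply/andP; split; first by rewrite lt_neqAle eq_sym sn0.
  by rewrite lt_neqAle sn1.
have ek : kap (z, s) = e by rewrite /kap /= r1 m1 !mul1r; ring.
rewrite ek.
have wM : `|w| <= M.
  rewrite /w; apply: le_trans (ler_normD _ _) _.
  rewrite !normrZ (ger0_norm sg0) ger0_norm; last lra.
  nra.
have hc := coord_le _ _ wM.
apply: (@small_S R d j0 hj0 w M).
- move: hz => /S_iff [hz _]; move: hb => /S_iff [hb' _].
  by apply: (@fut_conv R d j0 hj0) => //; rewrite sg0 sg1.
- by move=> j; case: (hc j).
- by move=> j; case: (hc j).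
- exact: e0.
- exact: he.
Qed.

End Key.


Section Main.
Variable R : realType.
Variable d : nat.
Variable j0 : 'I_d.
Hypothesis hj0 : val j0 = 0%N.

Lemma itv01 (s : R) : `[0, 1]%classic s <-> 0 <= s <= 1.
Proof. by rewrite /= in_itv. Qed.

Lemma pc_S : path_connected_set R (Sset R d).
Proof.
move=> x y hx hy.
have hyM : `|y| <= Num.max `|x| `|y| by rewrite le_max lexx orbT.
have hxM : `|x| <= Num.max `|x| `|y| by rewrite le_max lexx.
have [Phi [Pc P0 P1 Pb PS]] := @key R d j0 hj0 _ _ hy hyM.
exists (fun s => Phi (x, s)); split.
- apply: continuous_subspaceT => s.
  apply: (@continuous_comp _ _ _ (fun s => (x, s)) Phi); last exact: Pc.
  exact: (cvg_pair (cvg_cst x) cvg_id).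
- by move=> _ [s /itv01 hs <-]; apply: PS.
- exact: P0.
- exact: P1.
Qed.

Lemma loop_S (g : R -> Defs.cpoint R d) :
    {within `[0, 1]%classic, continuous g} -> g @` `[0, 1]%classic `<=` Sset R d -> g 0 = g 1 ->
    exists H : R * R -> Defs.cpoint R d,
      [/\ {within `[0, 1]%classic `*` `[0, 1]%classic, continuous H},
          H @` (`[0, 1]%classic `*` `[0, 1]%classic) `<=` Sset R d,
          (forall t, t \in `[0, 1] -> H (t, 0) = g t /\ H (t, 1) = g 0) &
          (forall s, s \in `[0, 1] -> H (0, s) = g 0 /\ H (1, s) = g 0)].
Proof.
move=> gc gim g01.
have i0 : `[0, 1]%classic (0 : R) by apply/itv01; rewrite lexx ler01.
have i1 : `[0, 1]%classic (1 : R) by apply/itv01; rewrite lexx ler01.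
have /compact_bounded [M0 [_ hM0]] := continuous_compact gc (@segment_compact R 0 1).
have hM : forall t, `[0, 1]%classic t -> `|g t| <= M0 + 1.
  move=> t ht; apply: (hM0 (M0 + 1)); first by rewrite ltrDl ltr01.
  by exists t.
have hb : Sset R d (g 0) by apply: gim; exists 0.
have [Phi [Pc P0 P1 Pb PS]] := @key R d j0 hj0 _ _ hb (hM 0 i0).
exists (fun p => Phi (g p.1, p.2)); split.
- apply/continuous_subspace_prodP => p _.
  pose F := (fun p : subspace (`[0, 1]%classic : set R) * subspace (`[0, 1]%classic : set R) => (g p.1, (p.2 : R))).
  suff hf : {for p, continuous F} by exact (@continuous_comp _ _ _ F Phi p hf (Pc _)).
  pose G1 := fun q : subspace (`[0, 1]%classic : set R) * subspace (`[0, 1]%classic : set R) => from_subspace (`[0, 1]%classic : set R) g q.1.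
  pose G2 := fun q : subspace (`[0, 1]%classic : set R) * subspace (`[0, 1]%classic : set R) => @incl_subspace _ (`[0, 1]%classic : set R) q.2.
  have h1 : {for p, continuous G1}.
    by apply: continuous_comp; [exact: cvg_fst | exact: gc].
  have h2 : {for p, continuous G2}.
    apply: (@continuous_comp _ _ _ snd); [exact: cvg_snd | exact: incl_subspace_continuous].
  exact (cvg_pair h1 h2).
- move=> _ [[t s] [ht hs] <-] /=.
  apply: PS; [by apply: gim; exists t | exact: hM | exact/itv01].
- by move=> t ht; rewrite P0 P1.
- by move=> s hs; rewrite -g01 Pb.
Qed.

Lemma conn_S : connected (Sset R d).
Proof.
case: (pselect (exists b, Sset R d b)) => [[b hb]|nS]; last first.
  rewrite (_ : Sset R d = set0); first exact: connected0.
  by apply/seteqP; split => x //= hx; apply: nS; exists x.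
pose P (g : R -> Defs.cpoint R d) := [/\ {within `[0, 1]%classic, continuous g},
      g @` `[0, 1]%classic `<=` Sset R d & g 0 = b].
have i0 : `[0, 1]%classic (0 : R) by apply/itv01; rewrite lexx ler01.
have i1 : `[0, 1]%classic (1 : R) by apply/itv01; rewrite lexx ler01.
rewrite (_ : Sset R d = \bigcup_(g in P) (g @` `[0, 1]%classic)).
  apply: bigcup_connected.
    by exists b => g [_ _ gb]; exists 0.
  move=> g [gc _ _]; apply: connected_continuous_connected => //.
  exact: segment_connected.
apply/seteqP; split => x.
  move=> hx; have [g [gc gim g0 g1]] := pc_S _ _ hb hx.
  by exists g => //; exists 1.
by move=> [g [_ gim _] hx]; apply: gim.
Qed.

End Main.

Theorem lemma26 (R : realType) (d : nat) (hd : (2 <= d)%N) :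
  open (future_tube R d `\` cutL R d) /\
  connected (future_tube R d `\` cutL R d) /\
  simply_connected R (future_tube R d `\` cutL R d).
Proof.
have h0 : (0 < d)%N by apply: leq_trans hd.
pose j0 := Ordinal h0.
have hj0 : val j0 = 0%N by [].
split; first exact: open_S.
split; first exact: (@conn_S R d j0 hj0).
split; first exact: (@pc_S R d j0 hj0).
move=> g gc gim g01; exact: (@loop_S R d j0 hj0 g gc gim g01).
Qed.
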